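(* Let $\mathbf{X}$ be a Banach space, $\mathcal{S}\subset\mathbf{X}$, and let $\mathbb{P}$ be a Borel probability measure on $\mathcal{S}$ of logarithmic growth order $s_0\ge0$ with respect to $\mathbf{X}$. Let $s>s_0$ and let $c=c(s)>0$, $\varepsilon_0=\varepsilon_0(s)>0$ be such that $\mathbb{P}(\mathcal{S}\cap\mathcal{B}(\mathbf{x},\varepsilon;\mathbf{X}))\le2^{-c\varepsilon^{-1/s}}$ for all $\mathbf{x}\in\mathbf{X}$, $\varepsilon\in(0,\varepsilon_0)$. Then for any $R\in\mathbb{N}$ and any encoder/decoder pair $(E_R,D_R)$ of code-length $R$, \[\mathbb{P}^\ast(\{\mathbf{x}\in\mathcal{S}:\|\mathbf{x}-D_R(E_R(\mathbf{x}))\|_{\mathbf{X}}\le\varepsilon\})\le2^{R-c\varepsilon^{-1/s}}\qquad\forall\varepsilon\in(0,\varepsilon_0).\] Furthermore, for any $s>s_0$ and $K>0$ there exists $R_0=R_0(s,s_0,K,\mathbb{P},\mathcal{S},\mathbf{X})\in\mathbb{N}$ such that for every codec $\mathcal{C}=((E_R,D_R))_{R\in\mathbb{N}}$, \[\mathbb{P}^\ast(\{\mathbf{x}\in\mathcal{S}:\|\mathbf{x}-D_R(E_R(\mathbf{x}))\|_{\mathbf{X}}\le K\cdot R^{-s}\})\le2^{-R}\qquad\forall R\ge R_0.\]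
   Context: Let $(\mathbf{X},\|\cdot\|_{\mathbf{X}})$ be a real Banach space and $\mathcal{S}\subset\mathbf{X}$. An encoder/decoder pair of code-length $R$ is a pair of maps $E_R:\mathcal{S}\to\{0,1\}^R$, $D_R:\{0,1\}^R\to\mathbf{X}$; a codec is a sequence $((E_R,D_R))_{R\in\mathbb{N}}$ of such pairs. $\mathcal{S}$ carries the trace $\sigma$-algebra of the Borel $\sigma$-algebra of $\mathbf{X}$; $\mathbb{P}^\ast(M)=\inf\{\sum_n\mathbb{P}(M_n):M_n\text{ measurable},M\subset\bigcup_nM_n\}$ is the outer measure. $\mathcal{B}(\mathbf{x},\varepsilon;\mathbf{X})$ is the closed ball. $\mathbb{P}$ has (logarithmic) growth order $s_0\in[0,\infty)$ w.r.t. $\mathbf{X}$ if for every $s>s_0$ there exist $\varepsilon_0,c>0$ with $\mathbb{P}(\mathcal{S}\cap\mathcal{B}(\mathbf{x},\varepsilon;\mathbf{X}))\le2^{-c\varepsilon^{-1/s}}$ for all $\mathbf{x}\in\mathbf{X}$, $\varepsilon\in(0,\varepsilon_0)$. *)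

(* Defs.v *)
From HB Require Import structures.
From mathcomp Require Import all_boot all_order all_algebra.
From mathcomp Require Import all_classical all_reals all_analysis.
Set Implicit Arguments. Unset Strict Implicit. Unset Printing Implicit Defensive.
Import Order.TTheory GRing.Theory Num.Theory.
Import numFieldNormedType.Exports.
Local Open Scope classical_set_scope.
Local Open Scope ring_scope.

Definition borel_set (R : realType) (X : normedModType R) : set (set X) :=
  <<s [set O : set X | open O] >>.

Definition cball (R : realType) (X : normedModType R) (x : X) (eps : R) : set X :=
  [set y | `|y - x| <= eps].

(* [T] with [emb : T -> X] is a faithful copy of the subset S of X equipped
   with the trace sigma-algebra of the Borel sigma-algebra of X. *)
Definition trace_borel_copy (R : realType) (X : normedModType R) (S : set X)
    (d : measure_display) (T : measurableType d) (emb : T -> X) : Prop :=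
  injective emb /\ range emb = S /\
  (forall A : set T, measurable A <-> exists2 B, borel_set B & A = emb @^-1` B).

(* P has logarithmic growth order s0 w.r.t. X (P being a measure on the copy
   T of S, so that P(S ∩ B(x,eps;X)) is P (emb @^-1` B(x,eps;X))). *)
Definition growth_order (R : realType) (X : normedModType R)
    (d : measure_display) (T : measurableType d) (emb : T -> X)
    (P : set T -> \bar R) (s0 : R) : Prop :=
  0 <= s0 /\
  forall s, s0 < s -> exists eps0 c : R, 0 < eps0 /\ 0 < c /\
    forall (x : X) (eps : R), 0 < eps -> eps < eps0 ->
      (P (emb @^-1` cball x eps) <= (powR 2 (- (c * powR eps (- s^-1))))%:E)%E.

Definition codeword (n : nat) := n.-tuple bool.

(* Main.v *)
Require Import Defs.
From HB Require Import structures.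
From mathcomp Require Import all_boot all_order all_algebra.
From mathcomp Require Import all_classical all_reals all_analysis.
Import Order.TTheory GRing.Theory Num.Theory.
Import numFieldNormedType.Exports.
Local Open Scope classical_set_scope.
Local Open Scope ring_scope.
From mathcomp Require Import ring lra.
Lemma cball_meas (R : realType) (X : normedModType R) (S : set X)
    (d : measure_display) (T : measurableType d) (emb : T -> X) x eps :
  trace_borel_copy S emb -> 0 < eps -> measurable (emb @^-1` cball x eps).
Proof.
move=> [_ [_ H]] e0; apply/H; exists (cball x eps) => //.
have -> : cball x eps = ~` (~` closed_ball x eps).
  rewrite setCK closed_ballE //; apply/funext => y /=.
  by rewrite /cball /closed_ball_ /= distrC.
apply: sigma_algebraC; apply: sub_sigma_algebra.
exact/closed_openC/closed_ball_closed.
Qed.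

Lemma part1 (R : realType) (X : normedModType R) (S : set X)
    (d : measure_display) (T : measurableType d) (emb : T -> X)
    (P : probability T R) (y eps : R) (n : nat) (E : T -> codeword n)
    (D : codeword n -> X) :
  trace_borel_copy S emb -> 0 < eps ->
  (forall x, (P (emb @^-1` cball x eps) <= (powR 2 (- y))%:E)%E) ->
  (mu_ext P [set t : T | (`|emb t - D (E t)| <= eps)%R]
          <= (powR 2 (n%:R - y))%:E)%E.
Proof.
move=> tr e0 H.
pose N := #|{: n.-tuple bool}|.
pose w0 : n.-tuple bool := [tuple of nseq n false].
pose F := fun i => emb @^-1` cball (D (nth w0 (enum {: n.-tuple bool}) i)) eps.
have sub : [set t : T | (`|emb t - D (E t)| <= eps)%R] `<=` \big[setU/set0]_(i < N) F i.
  move=> t /= Ht; rewrite -bigcup_mkord.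
  exists (index (E t) (enum {: n.-tuple bool})).
    by rewrite /= /N cardE index_mem mem_enum.
  by rewrite /F /= nth_index ?mem_enum // /cball /= distrC.
apply: le_trans (le_mu_ext P sub) _.
have mF : forall i, measurable (F i) by move=> i; exact: cball_meas tr e0.
rewrite measurable_mu_extE; last exact: bigsetU_measurable.
apply: le_trans (Boole_inequality P (fun i _ => mF i)) _.
apply: (@le_trans _ _ (\sum_(i < N) (powR 2 (-y))%:E)%E).
  by apply: lee_sum => i _; exact: H.
rewrite sumEFin lee_fin sumr_const card_ord /N card_tuple card_bool.
rewrite -[X in X <= _]mulr_natr natrX -powR_mulrn // mulrC -powRD ?implybT //; by apply/implyP.
Qed.
Lemma part2 (R : realType) (X : normedModType R) (S : set X)
    (d : measure_display) (T : measurableType d) (emb : T -> X)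
    (P : probability T R) (s0 s K : R) :
  trace_borel_copy S emb -> growth_order emb P s0 -> s0 < s -> 0 < K ->
     exists R0 : nat,
       forall (E : forall n : nat, T -> codeword n)
              (D : forall n : nat, codeword n -> X) (n : nat),
         (R0 <= n)%N ->
         (mu_ext P [set t : T | (`|emb t - D n (E n t)| <= K * powR n%:R (- s))%R]
            <= (powR 2 (- n%:R))%:E)%E.
Proof.
move=> tr [s00 G] ss0 K0.
pose s' := (s0 + s) / 2.
have s0s' : s0 < s' by rewrite /s'; lra.
have s's : s' < s by rewrite /s'; lra.
have s'0 : 0 < s' by lra.
have s0' : 0 < s by lra.
have [eps0 [c [e00 [c0 Hb]]]] := G s' s0s'.
pose a := s / s' - 1.
have a0 : 0 < a by rewrite /a subr_gt0 ltr_pdivlMr // mul1r.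
pose kk := powR K (- s'^-1).
have kk0 : 0 < kk := powR_gt0 _ K0.
pose M := 2 / (c * kk).
have M0 : 0 <= M by rewrite /M divr_ge0 // ltW // mulr_gt0.
pose A := powR (K / eps0) (s^-1).
pose B := powR M (a^-1).
exists (Num.truncn (A + B)).+1 => E D n Hn.
have nAB : A + B < n%:R.
  by apply: lt_le_trans (truncnS_gt _) _; rewrite ler_nat.
have A0 : 0 <= A := powR_ge0 _ _.
have B0 : 0 <= B := powR_ge0 _ _.
have nA : A < n%:R by lra.
have nB : B < n%:R by lra.
have n0 : 0 < n%:R :> R by lra.
pose eps := K * powR n%:R (- s).
have eps_pos : 0 < eps by rewrite mulr_gt0 // powR_gt0.
have epslt : eps < eps0.
  have h : K / eps0 < powR n%:R s.
    have -> : K / eps0 = powR A s.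
      by rewrite /A -powRrM mulVf ?gt_eqF // powRr1 // divr_ge0 // ltW.
    by apply: gt0_ltr_powR => //; rewrite nnegrE ?powR_ge0 // ltW.
  move: h; rewrite /eps powRN ltr_pdivrMr // => h.
  by rewrite ltr_pdivrMr ?powR_gt0 // mulrC.
have H1 := @part1 _ _ _ _ _ _ P (c * powR eps (- s'^-1)) eps n (E n) (D n) tr eps_pos
  (fun x => Hb x eps eps_pos epslt).
apply: le_trans H1 _; rewrite lee_fin; apply: ler_powR; first lra.
have -> : powR eps (- s'^-1) = kk * (n%:R * powR n%:R a).
  rewrite /eps powRM ?ltW ?powR_gt0 // -powRrM.
  have -> : - s * - s'^-1 = 1 + a by rewrite /a mulrNN addrC subrK.
  rewrite powRD; last by apply/implyP => _; rewrite gt_eqF.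
  by rewrite powRr1 // ltW.
have Ma : M < powR n%:R a.
  have -> : M = powR B a.
    by rewrite /B -powRrM mulVf ?gt_eqF // powRr1.
  by apply: gt0_ltr_powR => //; rewrite nnegrE ?powR_ge0 // ltW.
have e : c * (kk * (n%:R * M)) = 2 * n%:R.
  by rewrite /M; field; rewrite !gt_eqF.
suff h : 2 * n%:R <= c * (kk * (n%:R * powR n%:R a)).
  rewrite -[X in _ <= X]/(- (n%:R : R)); lra.
by rewrite -e ler_pM2l // ler_pM2l // ler_pM2l // ltW.
Qed.
Theorem lemma2p3 (R : realType) (X : completeNormedModType R) (S : set X)
    (d : measure_display) (T : measurableType d) (emb : T -> X)
    (P : probability T R) (s0 : R) :
  trace_borel_copy S emb ->
  growth_order emb P s0 ->
  (forall s c eps0 : R, s0 < s -> 0 < c -> 0 < eps0 ->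
     (forall (x : X) (eps : R), 0 < eps -> eps < eps0 ->
        (P (emb @^-1` cball x eps) <= (powR 2 (- (c * powR eps (- s^-1))))%:E)%E) ->
     forall (n : nat) (E : T -> codeword n) (D : codeword n -> X) (eps : R),
       0 < eps -> eps < eps0 ->
       (mu_ext P [set t : T | (`|emb t - D (E t)| <= eps)%R]
          <= (powR 2 (n%:R - c * powR eps (- s^-1)))%:E)%E) /\
  (forall s K : R, s0 < s -> 0 < K ->
     exists R0 : nat,
       forall (E : forall n : nat, T -> codeword n)
              (D : forall n : nat, codeword n -> X) (n : nat),
         (R0 <= n)%N ->
         (mu_ext P [set t : T | (`|emb t - D n (E n t)| <= K * powR n%:R (- s))%R]
            <= (powR 2 (- n%:R))%:E)%E).
Proof.
move=> tr go; split.
  move=> s c eps0 _ _ _ Hb n E D eps e0 ee0.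
  apply: (@part1 _ _ _ _ _ _ P (c * powR eps (- s^-1)) eps n E D tr e0).
  by move=> x; exact: Hb.
move=> s K ss0 K0; exact: part2 tr go ss0 K0.
Qed.
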